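(* Let $\gamma(x)=\sum_{k\ge2}\gamma_kx^{k-1}$ be a degree distribution with average degree $a$ and maximal degree $d\ge3$, and let $i$ be an integer with $1<i<d$ such that $\gamma_i>0$ and $\gamma_{i+2}>0$. For $\beta>0$ define $$\hat\gamma(x)=\gamma(x)+\beta x^{i}-\Bigl\{\frac{i}{2(i+1)}\beta x^{i-1}+\frac{i+2}{2(i+1)}\beta x^{i+1}\Bigr\}.$$ Then for every sufficiently small $\beta>0$, $\hat\gamma$ is a degree distribution with the same average degree $a$ and the same maximal degree $d$, and moreover $\gamma(x)<\hat\gamma(x)$ for $\frac{i}{i+2}<x<1$ and $\gamma(x)>\hat\gamma(x)$ for $0<x<\frac{i}{i+2}$.
   Context: A degree distribution is a polynomial $\gamma(x)=\sum_{k\ge2}\gamma_kx^{k-1}$ with $\gamma_k\ge0$ and $\sum_k\gamma_k=1$; its maximal degree is the largest $k$ with $\gamma_k\ne0$, and its average degree $a$ is defined by $1/a=\int_0^1\gamma(x)\,dx$. *)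

(* Defs.v *)
(* A degree distribution gamma(x) = sum_{k>=2} gamma_k x^(k-1)
   is represented as a polynomial p : {poly R}; the coefficient p`_j is
   gamma_{j+1} (the coefficient of x^j), so gamma_k = p`_(k.-1). *)
From HB Require Import structures.
From mathcomp Require Import all_boot all_order all_algebra.
Set Implicit Arguments. Unset Strict Implicit. Unset Printing Implicit Defensive.
Import Order.TTheory GRing.Theory Num.Theory.
Local Open Scope ring_scope.

Section DegDist.
Variable R : realFieldType.

Definition gcoef (p : {poly R}) (k : nat) : R := p`_(k.-1).

Definition is_degdist (p : {poly R}) : Prop :=
  p`_0 = 0 /\ (forall j : nat, 0 <= p`_j) /\ \sum_(j < size p) p`_j = 1.

(* maximal degree: largest k with gamma_k <> 0, i.e. (deg p) + 1 = size p *)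
Definition maxdeg (p : {poly R}) : nat := size p.

(* int_0^1 p(x) dx, computed termwise: sum_j p_j / (j+1) *)
Definition int01 (p : {poly R}) : R := \sum_(j < size p) p`_j / (j.+1)%:R.

(* average degree a, defined by 1/a = int_0^1 gamma(x) dx *)
Definition avgdeg (p : {poly R}) : R := (int01 p)^-1.

End DegDist.

(* Main.v *)
Require Import Defs.
From HB Require Import structures.
From mathcomp Require Import all_boot all_order all_algebra.
From mathcomp Require Import zify ring lra.
Import Order.TTheory GRing.Theory Num.Theory.
Local Open Scope ring_scope.

Lemma sum_delta (R : realFieldType) (n k : nat) (F : nat -> R) : (k < n)%N ->
  \sum_(j < n) F j * ((j : nat) == k)%:R = F k.
Proof.
move=> hk; rewrite (bigD1 (Ordinal hk)) //= eqxx mulr1 big1 ?addr0 //.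
move=> j hj; suff -> : ((j : nat) == k) = false by rewrite mulr0.
by apply/negbTE; apply: contra hj => /eqP h; apply/eqP/val_inj.
Qed.

Lemma size_gt_coef (R : realFieldType) (p : {poly R}) j : p`_j != 0 -> (j < size p)%N.
Proof. by move=> h; rewrite ltnNge; apply: contra h => /(nth_default 0) ->. Qed.

Ltac natlia := repeat match goal with H : ?T |- _ =>
  lazymatch T with is_true (leq _ _) => fail | @eq nat _ _ => fail
  | is_true (negb _) => fail
  | nat => fail | _ => clear H end end; lia.

Theorem lemma8 (R : realFieldType) (g : {poly R}) (i : nat) :
  is_degdist g -> (3 <= maxdeg g)%N ->
  (1 < i)%N -> (i < maxdeg g)%N ->
  0 < gcoef g i -> 0 < gcoef g i.+2 ->
  exists eps : R, 0 < eps /\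
    forall beta : R, 0 < beta -> beta < eps ->
      let gh := g + beta *: 'X^i
                  - ((i%:R / (2 * (i.+1)%:R) * beta) *: 'X^(i.-1)
                     + ((i.+2)%:R / (2 * (i.+1)%:R) * beta) *: 'X^(i.+1)) in
      [/\ is_degdist gh, avgdeg gh = avgdeg g, maxdeg gh = maxdeg g,
          (forall x : R, i%:R / (i.+2)%:R < x -> x < 1 -> g.[x] < gh.[x]) &
          (forall x : R, 0 < x -> x < i%:R / (i.+2)%:R -> gh.[x] < g.[x])].
Proof.
move=> [g0 [gnn gsum]] _ hi _.
case: i hi => [|[|k]] // _.
rewrite /gcoef /= => ga gb.
exists (Num.min g`_k.+1 g`_k.+3); split; first by rewrite lt_min ga gb.
move=> b b0 hb; set gh := (g + _ - _); move: hb; rewrite lt_min => /andP[ba bb].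
set n : R := k%:R.
have n0 : 0 <= n by rewrite /n ler0n.
have e2 : (k.+2)%:R = n + 2 :> R by rewrite -addn2 natrD.
have e3 : (k.+3)%:R = n + 3 :> R by rewrite -addn3 natrD.
have e4 : (k.+4)%:R = n + 4 :> R by rewrite -[k.+4]addn4 natrD.
set c1 := (k.+2)%:R / (2 * (k.+3)%:R) : R.
set c2 := (k.+4)%:R / (2 * (k.+3)%:R) : R.
have c1e : c1 = (n + 2) / (2 * (n + 3)) by rewrite /c1 e2 e3.
have c2e : c2 = (n + 4) / (2 * (n + 3)) by rewrite /c2 e4 e3.
have n3 : n + 3 != 0 by apply/lt0r_neq0; lra.
have c1lt : c1 < 1 by rewrite c1e ltr_pdivrMr; lra.
have c2lt : c2 < 1 by rewrite c2e ltr_pdivrMr; lra.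
have c1gt : 0 < c1 by rewrite c1e divr_gt0 //; lra.
have c2gt : 0 < c2 by rewrite c2e divr_gt0 //; lra.
have c12 : c1 + c2 = 1 by rewrite c1e c2e; field; lra.
have hc1b : c1 * b < b.
  by rewrite -subr_gt0 -{1}[b]mul1r -mulrBl mulr_gt0 // subr_gt0.
have hc2b : c2 * b < b.
  by rewrite -subr_gt0 -{1}[b]mul1r -mulrBl mulr_gt0 // subr_gt0.
have hcb : c1 * b + c2 * b = b by rewrite -mulrDl c12 mul1r.
have coefgh : forall j, gh`_j = g`_j + b * (j == k.+2)%:R
    - (c1 * b * (j == k.+1)%:R + c2 * b * (j == k.+3)%:R).
  by move=> j; rewrite /gh !(coefD, coefB, coefN, coefZ, coefXn).
have gsz : (k.+4 <= size g)%N by apply: size_gt_coef; rewrite gt_eqF.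
have szgh : size gh = size g.
  apply/eqP; rewrite eqn_leq; apply/andP; split.
    apply/leq_sizeP => j hj; rewrite coefgh nth_default //.
    have -> : (j == k.+2) = false by apply/eqP; natlia.
    have -> : (j == k.+1) = false by apply/eqP; natlia.
    have -> : (j == k.+3) = false by apply/eqP; natlia.
    by rewrite !mulr0 !addr0 subr0.
  have hs : (size g).-1.+1 = size g by natlia.
  rewrite -hs; apply: size_gt_coef; rewrite coefgh.
  have -> : ((size g).-1 == k.+2) = false by apply/eqP; natlia.
  have -> : ((size g).-1 == k.+1) = false by apply/eqP; natlia.
  case: (eqVneq (size g).-1 k.+3) => [->|hne].
    rewrite !mulr0 mulr1 addr0 add0r; apply/lt0r_neq0; lra.
  rewrite !mulr0 !addr0 subr0.
  have : lead_coef g != 0 by rewrite lead_coef_eq0 -size_poly_gt0; natlia.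
  by rewrite lead_coefE.
have hornergh : forall x, gh.[x] = g.[x] + b * x ^+ k.+2
    - (c1 * b * x ^+ k.+1 + c2 * b * x ^+ k.+3).
  by move=> x; rewrite /gh !(hornerD, hornerN, hornerZ, hornerXn).
split.
- split; [|split].
  + rewrite coefgh g0 /=; lra.
  + move=> j; rewrite coefgh.
    case: (eqVneq j k.+1) => [->|h1].
      have -> : (k.+1 == k.+2) = false by apply/eqP; natlia.
      have -> : (k.+1 == k.+3) = false by apply/eqP; natlia.
      rewrite ?eqxx !mulr0 ?mulr1 !addr0; lra.
    case: (eqVneq j k.+3) => [->|h3].
      have -> : (k.+3 == k.+2) = false by apply/eqP; natlia.
      rewrite ?eqxx !mulr0 ?mulr1 !addr0 ?add0r; lra.
    rewrite !mulr0 ?addr0 ?subr0.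
    have := gnn j; case: (j == k.+2) => /=; rewrite ?mulr1 ?mulr0; lra.
  + have hs : forall p : {poly R}, \sum_(j < size p) p`_j = p.[1].
      by move=> p; rewrite horner_coef; apply: eq_bigr => j _; rewrite expr1n mulr1.
    rewrite hs hornergh -hs gsum !expr1n !mulr1; lra.
- rewrite /avgdeg; congr (_^-1).
  rewrite /int01 szgh.
  under eq_bigr => j _ do rewrite coefgh.
  rewrite (eq_bigr (fun j : 'I_(size g) => g`_j / (j.+1)%:R
     + (b / (j.+1)%:R) * ((j:nat) == k.+2)%:R
     - ((c1 * b / (j.+1)%:R) * ((j:nat) == k.+1)%:R
      + (c2 * b / (j.+1)%:R) * ((j:nat) == k.+3)%:R))); last first.
    by move=> j _; rewrite !mulrBl !mulrDl; ring.
  rewrite sumrB !big_split /=.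
  rewrite (@sum_delta _ _ _ (fun j => b / (j.+1)%:R)) ?(@sum_delta _ _ _ (fun j => c1 * b / (j.+1)%:R)) ?(@sum_delta _ _ _ (fun j => c2 * b / (j.+1)%:R)); try natlia.
  rewrite e3 c1e c2e -[k.+4]addn4 -[k.+2]addn2 !natrD -/n.
  rewrite -[X in _ = X]addr0 -addrA; congr (_ + _).
  have n2 : n + 2 != 0 by apply/lt0r_neq0; lra.
  have n4 : n + 4 != 0 by apply/lt0r_neq0; lra.
  field; rewrite -/n n2 n3 n4 //.
  exact: gsz.
  exact: (ltnW (ltnW gsz)).
  exact: (ltnW gsz).
- exact: szgh.
- move=> x hx1 hx2.
  have n4p : 0 < n + 4 by lra.
  move: hx1; rewrite e2 e4 ltr_pdivrMr // => hx1.
  have x0 : 0 < x by nra.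
  have key : b * x ^+ k.+2 - (c1 * b * x ^+ k.+1 + c2 * b * x ^+ k.+3)
      = b * x ^+ k.+1 * (((n + 4) * x - (n + 2)) * (1 - x) / (2 * (n + 3))).
    by rewrite c1e c2e !exprS; field.
  rewrite hornergh -addrA key ltrDl.
  apply: mulr_gt0; first by apply: mulr_gt0 => //; apply: exprn_gt0.
  apply: divr_gt0; last by lra.
  apply: mulr_gt0; lra.
- move=> x x0 hx2.
  have n4p : 0 < n + 4 by lra.
  move: hx2; rewrite e2 e4 ltr_pdivlMr // => hx2.
  have key : b * x ^+ k.+2 - (c1 * b * x ^+ k.+1 + c2 * b * x ^+ k.+3)
      = b * x ^+ k.+1 * (((n + 4) * x - (n + 2)) * (1 - x) / (2 * (n + 3))).
    by rewrite c1e c2e !exprS; field.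
  have x1 : x < 1.
    have : x * (n + 4) < n + 4 by lra.
    by rewrite -{2}[n + 4]mul1r ltr_pM2r.
  rewrite hornergh -addrA key gtrDl.
  rewrite pmulr_rlt0; last by apply: mulr_gt0 => //; apply: exprn_gt0.
  rewrite pmulr_llt0; last by rewrite invr_gt0; lra.
  rewrite pmulr_llt0; last by lra.
  lra.
Qed.
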